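(* Let $A=(X,\mathcal M,S,O)$ be a no-signalling empirical theory with $X$ finite, and let $B=(\Omega,\mu,\xi)$ be a factorizable, non-contextual ontological representation of $Op(A)$. Then the family $$d^\sigma(s):=\sum_{\lambda\in\Omega}\Big(\prod_{x\in X}\xi_{\{x\}}(\lambda)(s(x))\Big)\mu_\sigma(\lambda),\qquad s\in O^X,\ \sigma\in S,$$ is a global section of $A$; in particular $A$ is sheaf-theoretically non-contextual, and the canonical ontological representation of $Op(A)$ built from a global section of $A$ realises the same operational theory as $B$, namely $\sum_t\xi^{can}_U(t)(s)\mu^{can}_\sigma(t)=\sum_{\lambda\in\Omega}\xi_U(\lambda)(s)\mu_\sigma(\lambda)$ for all $\sigma$, $U$, $s$.
   Context: Fix a finite outcome set $O$. A system type is a set $X$ of measurement labels with a measurement cover $\mathcal M$ (subsets of $X$ with union $X$, none a proper subset of another); $U\subseteq X$ is jointly measurable if $U\subseteq C$ for some $C\in\mathcal M$. $O^U$ is the set of functions $U\to O$; $e|_U$ is the marginal on $O^U$ of a distribution $e$ on $O^V$, $U\subseteq V$. A state is a family of distributions $\sigma_C$ on $O^C$ ($C\in\mathcal M$), no-signalling if $\sigma_C|_{C\cap C'}=\sigma_{C'}|_{C\cap C'}$, in which case $\sigma_U:=\sigma_C|_U$ for jointly measurable $U\subseteq C$. An empirical theory $A=(X,\mathcal M,S,O)$ has a set $S$ of states; a global section is a family $d^\sigma$ of distributions on $O^X$ with $d^\sigma|_C=\sigma_C$ for all $C,\sigma$. Statistical equivalence: $\sigma\sim\sigma'$ iff $\sigma_C=\sigma'_C\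 \forall C$; $x\sim x'$ iff $\sigma_{\{x\}}=\sigma_{\{x'\}}\ \forall\sigma$. $Op(A)$ is the operational theory with preparations $S$, measurements the nonempty jointly measurable $U\subseteq X$, outcome set $O^U$ for $U$, and $d_{\sigma,U}(s)=\sigma_U(s)$. An ontological representation of an operational theory with preparations $P$, measurements $M$, outcome sets $O^m$ and statistics $d_{p,m}$ is $(\Omega,\mu,\xi)$ with $\Omega$ countable, distributions $\mu_p$ on $\Omega$, $\xi_m(\lambda)$ on $O^m$, satisfying $\sum_\lambda\xi_m(\lambda)(k)\mu_p(\lambda)=d_{p,m}(k)$; it is non-contextual if statistically equivalent preparations ($d_{p,\cdot}=d_{p',\cdot}$) have equal $\mu$ and statistically equivalent outcomes ($d_{\cdot,m}(k)=d_{\cdot,m'}(k')$) have equal $\xi_m(\lambda)(k)=\xi_{m'}(\lambda)(k')$ for all $\lambda$. A representation of $Op(A)$ is factorizable if $\xi_U(\lambda)(s)=\prod_{x\in U}\xi_{\{x\}}(\lambda)(s(x))$. Canonical representation: for a global section $d$ with $d^\sigma(s)=0$ whenever $s(x)\ne s(x')$ for some $x\sim x'$ and $d^\sigma=d^{\sigma'}$ when $\sigma\sim\sigma'$, and $q:X\to X/{\sim}$ the quotient map, it is given by $\Omega^{can}=\{t:X/{\sim}\to O\}$ (restricted to points in some support), $\mu^{can}_\sigma(t)=d^\sigma(t\circ q)$, $\xi^{can}_U(t)(s)=1$ if $s=(t\circ q)|_U$ and $0$ otherwise. *)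

(* Defs.v *)
From mathcomp Require Import all_boot.
From Stdlib Require Import Reals ClassicalEpsilon.

Unset Implicit Arguments.
Unset Strict Implicit.
Unset Printing Implicit Defensive.

Section Defs.

Variables (X O : finType).

Definition assign (U : {set X}) : finType := {ffun {x : X | x \in U} -> O}.

Definition fsum {T : finType} (f : T -> R) : R := \big[Rplus/R0]_(t : T) f t.

Definition fdist {T : finType} (e : T -> R) : Prop :=
  (forall t, Rle R0 (e t)) /\ fsum e = R1.

(* Countable (unordered) sum of a nonnegative family over a countable type:
   [psum f l] iff all f t >= 0 and l is the supremum of the finite partial sums. *)
Definition psum {T : countType} (f : T -> R) (l : R) : Prop :=
  (forall t, Rle R0 (f t)) /\
  is_lub (fun r => exists s : seq T, uniq s /\ r = \big[Rplus/R0]_(t <- s) f t) l.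

Definition cdist {T : countType} (m : T -> R) : Prop := psum m R1.

(* s in O^U and t in O^V agree on U ∩ V; for U ⊆ V this says s = t|_U *)
Definition agree (U V : {set X}) (s : assign U) (t : assign V) : bool :=
  [forall u : {x : X | x \in U}, forall v : {x : X | x \in V},
      (val u == val v) ==> (s u == t v)].

(* marginal e|_U of a distribution e on O^V (meaningful for U ⊆ V) *)
Definition marg (U V : {set X}) (e : assign V -> R) (s : assign U) : R :=
  \big[Rplus/R0]_(t : assign V | agree U V s t) e t.

Definition is_cover (M : {set {set X}}) : Prop :=
  \bigcup_(C in M) C = [set: X] /\
  (forall C C', C \in M -> C' \in M -> ~~ (C \proper C')).

Definition jointly_measurable (M : {set {set X}}) (U : {set X}) : bool :=
  [exists C in M, U \subset C].

Definition measurement (M : {set {set X}}) (U : {set X}) : Prop :=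
  U != set0 /\ jointly_measurable M U.

(* states: sigma_C for every C (only C in M is meaningful) *)
Definition state_fam := forall C : {set X}, assign C -> R.

Definition empirical_theory (M : {set {set X}}) (S : Type) (st : S -> state_fam) : Prop :=
  is_cover M /\ forall sg C, C \in M -> fdist (st sg C).

Definition no_signalling (M : {set {set X}}) (S : Type) (st : S -> state_fam) : Prop :=
  forall sg C C', C \in M -> C' \in M ->
    forall s : assign (C :&: C'), marg (C :&: C') C (st sg C) s = marg (C :&: C') C' (st sg C') s.

(* sigma_U := sigma_C|_U for some C in M containing U (well defined under
   no-signalling); this is d_{sigma,U} in Op(A) *)
Definition stU (M : {set {set X}}) (S : Type) (st : S -> state_fam)
  (sg : S) (U : {set X}) (s : assign U) : R :=
  match [pick C in M | U \subset C] with
  | Some C => marg U C (st sg C) s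
  | None => R0
  end.

Definition global_section (M : {set {set X}}) (S : Type) (st : S -> state_fam)
  (d : S -> assign [set: X] -> R) : Prop :=
  forall sg, fdist (d sg) /\
    forall C, C \in M -> forall s : assign C, marg C [set: X] (d sg) s = st sg C s.

Definition sheaf_noncontextual (M : {set {set X}}) (S : Type) (st : S -> state_fam) : Prop :=
  exists d, global_section M S st d.

Definition cst (x : X) (o : O) : assign [set x] := [ffun _ => o].

Definition at_ (s : assign [set: X]) (x : X) : O := s (exist _ x (in_setT x)).

Definition restr (U : {set X}) (s : assign [set: X]) : assign U :=
  [ffun u : {x : X | x \in U} => at_ s (val u)].

Section Ont.
Variables (M : {set {set X}}) (S : Type) (st : S -> state_fam).
Variables (Om : countType) (mu : S -> Om -> R)
          (xi : forall U : {set X}, Om -> assign U -> R).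

Definition ont_rep : Prop :=
  (forall sg, cdist (mu sg)) /\
  (forall U, measurement M U -> forall l, fdist (xi U l)) /\
  (forall sg U, measurement M U -> forall k : assign U,
      psum (fun l => Rmult (xi U l k) (mu sg l)) (stU M S st sg U k)).

Definition ont_noncontextual : Prop :=
  (forall sg sg',
     (forall U, measurement M U -> forall k : assign U,
         stU M S st sg U k = stU M S st sg' U k) ->
     forall l, mu sg l = mu sg' l) /\
  (forall U U' (k : assign U) (k' : assign U'),
     measurement M U -> measurement M U' ->
     (forall sg, stU M S st sg U k = stU M S st sg U' k') ->
     forall l, xi U l k = xi U' l k').

Definition factorizable : Prop :=
  forall U, measurement M U -> forall l (s : assign U),
    xi U l s = \big[Rmult/R1]_(u : {x : X | x \in U}) xi [set val u] l (cst (val u) (s u)).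

Definition dterm (sg : S) (s : assign [set: X]) (l : Om) : R :=
  Rmult (\big[Rmult/R1]_(x : X) xi [set x] l (cst x (at_ s x))) (mu sg l).

End Ont.

Section Canon.
Variables (M : {set {set X}}) (S : Type) (st : S -> state_fam).

Definition state_equiv (sg sg' : S) : Prop :=
  forall C, C \in M -> forall s : assign C, st sg C s = st sg' C s.

Definition label_equiv (x x' : X) : Prop :=
  forall sg (o : O), stU M S st sg [set x] (cst x o) = stU M S st sg [set x'] (cst x' o).

(* boolean version (classical decision) to build the quotient X/~ *)
Definition label_equivb (x x' : X) : bool :=
  if excluded_middle_informative (label_equiv x x') then true else false.

Definition cls (x : X) : {set X} := [set y | label_equivb x y].

(* X/~ as the finite type of equivalence classes *)
Definition Xq : finType := {C : {set X} | [exists x, C == cls x]}.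

Definition qmap (x : X) : Xq :=
  exist _ (cls x) (introT existsP (ex_intro _ x (eqxx (cls x)))).

Definition Omcan : finType := {ffun Xq -> O}.

Definition tq (t : Omcan) : assign [set: X] := [ffun u => t (qmap (val u))].

Definition canonical_ok (d : S -> assign [set: X] -> R) : Prop :=
  (forall sg (s : assign [set: X]) x x',
      label_equiv x x' -> at_ s x != at_ s x' -> d sg s = R0) /\
  (forall sg sg', state_equiv sg sg' -> forall s, d sg s = d sg' s).

Definition mu_can (d : S -> assign [set: X] -> R) (sg : S) (t : Omcan) : R :=
  d sg (tq t).

Definition xi_can (U : {set X}) (t : Omcan) (s : assign U) : R :=
  if s == restr U (tq t) then R1 else R0.

End Canon.

End Defs.

Arguments assign {X O} U.
Arguments agree {X O U V} s t.
Arguments marg {X O U V} e s.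
Arguments is_cover {X} M.
Arguments jointly_measurable {X} M U.
Arguments measurement {X} M U.
Arguments state_fam {X O}.
Arguments empirical_theory {X O} M {S} st.
Arguments no_signalling {X O} M {S} st.
Arguments stU {X O} M {S} st sg U s.
Arguments global_section {X O} M {S} st d.
Arguments sheaf_noncontextual {X O} M {S} st.
Arguments cst {X O} x o.
Arguments at_ {X O} s x.
Arguments restr {X O} U s.
Arguments ont_rep {X O} M {S} st {Om} mu xi.
Arguments ont_noncontextual {X O} M {S} st {Om} mu xi.
Arguments factorizable {X O} M {Om} xi.
Arguments dterm {X O S Om} mu xi sg s l.
Arguments state_equiv {X O} M {S} st sg sg'.
Arguments label_equiv {X O} M {S} st x x'.
Arguments label_equivb {X O} M {S} st x x'.
Arguments cls {X O} M {S} st x.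
Arguments Xq {X O} M {S} st.
Arguments qmap {X O} M {S} st x.
Arguments Omcan {X O} M {S} st.
Arguments tq {X O} M {S} st t.
Arguments canonical_ok {X O} M {S} st d.
Arguments mu_can {X O} M {S} st d sg t.
Arguments xi_can {X O} M {S} st U t s.

(* Main.v *)
Require Import Defs.
From HB Require Import structures.
From mathcomp Require Import all_boot.
From Stdlib Require Import Reals Lra Classical ClassicalEpsilon FunctionalExtensionality.

Set Implicit Arguments.
Unset Strict Implicit.
Unset Printing Implicit Defensive.

Lemma Rplus_A : associative Rplus. Proof. by move=> *; rewrite Rplus_assoc. Qed.
Lemma Rplus_C : commutative Rplus. Proof. exact: Rplus_comm. Qed.
Lemma Rplus_0m : left_id R0 Rplus. Proof. exact: Rplus_0_l. Qed.
HB.instance Definition _ := Monoid.isComLaw.Build R R0 Rplus Rplus_A Rplus_C Rplus_0m.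
Lemma Rmult_A : associative Rmult. Proof. by move=> *; rewrite Rmult_assoc. Qed.
Lemma Rmult_C : commutative Rmult. Proof. exact: Rmult_comm. Qed.
Lemma Rmult_1m : left_id R1 Rmult. Proof. exact: Rmult_1_l. Qed.
HB.instance Definition _ := Monoid.isComLaw.Build R R1 Rmult Rmult_A Rmult_C Rmult_1m.
Lemma Rmult_0m : left_zero R0 Rmult. Proof. exact: Rmult_0_l. Qed.
Lemma Rmult_m0 : right_zero R0 Rmult. Proof. exact: Rmult_0_r. Qed.
HB.instance Definition _ := Monoid.isMulLaw.Build R R0 Rmult Rmult_0m Rmult_m0.
Lemma RDl : left_distributive Rmult Rplus. Proof. by move=> *; rewrite Rmult_plus_distr_r. Qed.
Lemma RDr : right_distributive Rmult Rplus. Proof. by move=> *; rewrite Rmult_plus_distr_l. Qed.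
HB.instance Definition _ := Monoid.isAddLaw.Build R Rmult Rplus RDl RDr.

Open Scope R_scope.

Lemma sum_ge0 (I : Type) (r : seq I) (P : pred I) (F : I -> R) :
  (forall i, P i -> 0 <= F i) -> 0 <= \big[Rplus/R0]_(i <- r | P i) F i.
Proof. move=> H; apply: big_ind => //; [lra | move=> *; lra]. Qed.

Lemma sum_le (I : Type) (r : seq I) (P : pred I) (F G : I -> R) :
  (forall i, P i -> F i <= G i) ->
  \big[Rplus/R0]_(i <- r | P i) F i <= \big[Rplus/R0]_(i <- r | P i) G i.
Proof.
move=> H; elim: r => [|a r IH]; first by rewrite !big_nil; lra.
rewrite !big_cons; case: ifP => Pa //; have := H a Pa; lra.
Qed.

Lemma Rle_addr (a b : R) : 0 <= b -> a <= a + b. Proof. lra. Qed.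

Lemma sum_split (I : Type) (r : seq I) (P : pred I) (F G : I -> R) :
  \big[Rplus/R0]_(i <- r | P i) (F i + G i) =
  \big[Rplus/R0]_(i <- r | P i) F i + \big[Rplus/R0]_(i <- r | P i) G i.
Proof.
elim: r => [|a r IH]; first by rewrite !big_nil; lra.
rewrite !big_cons; case: ifP => _ //; rewrite IH; lra.
Qed.

Lemma sum_sub (T : countType) (s1 s : seq T) (f : T -> R) :
  (forall t, 0 <= f t) -> uniq s1 -> uniq s -> {subset s1 <= s} ->
  \big[Rplus/R0]_(t <- s1) f t <= \big[Rplus/R0]_(t <- s) f t.
Proof.
move=> f0 u1 u sub.
rewrite [X in _ <= X](bigID (fun t => t \in s1)) /=.
have -> : \big[Rplus/R0]_(t <- s | t \in s1) f t = \big[Rplus/R0]_(t <- s1) f t.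
  rewrite -big_filter; apply: perm_big; apply: uniq_perm => //.
    exact: filter_uniq.
  by move=> x; rewrite mem_filter; case: (boolP (x \in s1)) => // /sub ->.
apply: Rle_addr; apply: sum_ge0 => t _; exact: f0.
Qed.

Lemma psum_ge0 (T : countType) (f : T -> R) a : psum f a -> 0 <= a.
Proof. case=> _ [ub _]; apply: ub; exists [::]; by rewrite big_nil. Qed.

Lemma psum_unique (T : countType) (f : T -> R) a b : psum f a -> psum f b -> a = b.
Proof.
case=> _ [ua la] [_ [ub lb]]; apply: Rle_antisym; [apply: la | apply: lb]; done.
Qed.

Lemma lub_approx (E : R -> Prop) a e : is_lub E a -> 0 < e -> exists r, E r /\ a - e < r.
Proof.
move=> [ub lb] e0; apply: NNPP => H.
have : a <= a - e; last lra.
apply: lb => r Er; apply: Rnot_lt_le => lt; apply: H; by exists r.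
Qed.

Lemma psum_add (T : countType) (f g : T -> R) a b :
  psum f a -> psum g b -> psum (fun t => f t + g t) (a + b).
Proof.
move=> [f0 [ua la]] [g0 [ub lb]]; split; first by move=> t; have := f0 t; have := g0 t; lra.
split.
  move=> r [s [us ->]]; rewrite sum_split.
  have := ua _ (ex_intro _ s (conj us erefl)); have := ub _ (ex_intro _ s (conj us erefl)); lra.
move=> B ubB; apply: Rnot_lt_le => lt.
have e0 : 0 < (a + b - B) / 2 by lra.
have [r1 [[s1 [u1 ->]] h1]] := lub_approx (conj ua la) e0.
have [r2 [[s2 [u2 ->]] h2]] := lub_approx (conj ub lb) e0.
pose s : seq T := undup (s1 ++ s2).
have us : uniq s by exact: undup_uniq.
have := ubB (\big[Rplus/R0]_(t <- s) (f t + g t)) (ex_intro _ s (conj us erefl)).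
rewrite sum_split.
have sb1 : {subset s1 <= s} by move=> x hx; rewrite mem_undup mem_cat hx.
have sb2 : {subset s2 <= s} by move=> x hx; rewrite mem_undup mem_cat hx orbT.
have := @sum_sub _ s1 s f f0 u1 us sb1.
have := @sum_sub _ s2 s g g0 u2 us sb2.
lra.
Qed.

Lemma psum0 (T : countType) : psum (fun _ : T => 0) 0.
Proof.
split; first by move=> _; lra.
split; first by move=> r [s [_ ->]]; rewrite big1 //; lra.
move=> B ub; apply: ub; exists [::]; by rewrite big_nil.
Qed.

Lemma psum_ext (T : countType) (f g : T -> R) a : (forall t, f t = g t) -> psum f a -> psum g a.
Proof. by move=> H; rewrite (functional_extensionality f g H). Qed.

Lemma psum_big (T : countType) (I : Type) (r : seq I) (P : pred I) (F : I -> T -> R) (a : I -> R) :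
  (forall i, P i -> psum (F i) (a i)) ->
  psum (fun t => \big[Rplus/R0]_(i <- r | P i) F i t) (\big[Rplus/R0]_(i <- r | P i) a i).
Proof.
move=> H; elim: r => [|i r IH].
  rewrite big_nil; apply: psum_ext (@psum0 T) => t; by rewrite big_nil.
rewrite big_cons; case: ifP => Pi.
  apply: psum_ext (psum_add (H i Pi) IH) => t; by rewrite big_cons Pi.
apply: psum_ext IH => t; by rewrite big_cons Pi.
Qed.

Lemma psum_exists (T : countType) (f g : T -> R) b :
  (forall t, 0 <= f t <= g t) -> psum g b -> exists a, psum f a.
Proof.
move=> H [g0 [ub _]].
set E := fun r => exists s : seq T, uniq s /\ r = \big[Rplus/R0]_(t <- s) f t.
have bE : bound E.
  exists b => r [s [us ->]]; apply: Rle_trans (ub _ (ex_intro _ s (conj us erefl))).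
  apply: sum_le => t _; have := H t; lra.
have [m Hm] := completeness E bE (ex_intro _ 0 (ex_intro _ [::] (conj isT (esym (big_nil _ _ _ _))))).
exists m; split => // t; have := H t; lra.
Qed.

Set Implicit Arguments.
Unset Strict Implicit.
Unset Printing Implicit Defensive.
Open Scope R_scope.

Section Comb.
Variables (X O : finType).
Notation T := {x : X | x \in [set: X]}.

Lemma at_val (t : @assign X O [set: X]) (u : T) : at_ t (val u) = t u.
Proof. by rewrite /at_; congr (t _); apply: val_inj. Qed.

Lemma prodX_T (F : X -> R) : \big[Rmult/R1]_(x : X) F x = \big[Rmult/R1]_(u : T) F (val u).
Proof.
rewrite -(big_sub [set: X]) /=; apply: eq_bigl => x; by rewrite in_setT.
Qed.

Lemma total_prod (f : X -> O -> R) :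
  \big[Rplus/R0]_(t : @assign X O [set: X]) \big[Rmult/R1]_(x : X) f x (at_ t x)
  = \big[Rmult/R1]_(x : X) \big[Rplus/R0]_(o : O) f x o.
Proof.
rewrite prodX_T bigA_distr_bigA /=; apply: eq_bigr => t _.
by rewrite prodX_T; apply: eq_bigr => u _; rewrite at_val.
Qed.

Definition Qp (C : {set X}) (s : @assign X O C) (x : X) : pred O :=
  fun o => [forall v : {y : X | y \in C}, (val v == x) ==> (s v == o)].

Lemma marg_prod (C : {set X}) (s : @assign X O C) (f : X -> O -> R) :
  (forall x, x \notin C -> \big[Rplus/R0]_(o : O) f x o = R1) ->
  \big[Rplus/R0]_(t : @assign X O [set: X] | agree s t) \big[Rmult/R1]_(x : X) f x (at_ t x)
  = \big[Rmult/R1]_(u : {x : X | x \in C}) f (val u) (s u).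
Proof.
move=> H1.
have -> : \big[Rmult/R1]_(u : {x : X | x \in C}) f (val u) (s u)
   = \big[Rmult/R1]_(x : X) \big[Rplus/R0]_(o | Qp s x o) f x o.
  rewrite (bigID (fun x => x \in C)) /=.
  rewrite [X in _ = Rmult _ X]big1; last first.
    move=> x xC; rewrite -(H1 x xC); apply: eq_bigl => o.
    apply/forallP => v; apply/implyP => /eqP vx; move: xC; by rewrite -vx (valP v).
  rewrite Rmult_1_r [RHS]big_sub; apply: eq_bigr => v _.
  rewrite (big_pred1 (s v)) // => o; rewrite /Qp /=.
  apply/forallP/eqP => [/(_ v)|->]; first by rewrite eqxx /= => /eqP.
  by move=> w; apply/implyP => /eqP /val_inj ->.
rewrite prodX_T (bigA_distr_big_dep (fun u : T => Qp s (val u))) /=.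
apply: eq_big => [t|t _]; last first.
  by rewrite prodX_T; apply: eq_bigr => u _; rewrite at_val.
apply/forallP/familyP => [H u|H v]; rewrite /Qp.
  by apply/forallP => v; apply/implyP => /eqP e; have /forallP/(_ u)/implyP := H v; apply; apply/eqP.
by apply/forallP => u; apply/implyP => /eqP e; have /forallP/(_ v)/implyP := H u; apply; apply/eqP.
Qed.

End Comb.

Set Implicit Arguments.
Unset Strict Implicit.
Unset Printing Implicit Defensive.
Open Scope R_scope.

Section Comb2.
Variables (X O : finType).

Lemma sum_cst (x : X) (F : @assign X O [set x] -> R) :
  \big[Rplus/R0]_(k : @assign X O [set x]) F k = \big[Rplus/R0]_(o : O) F (cst x o).
Proof.
have xx : x \in [set x] by rewrite set11.
rewrite (reindex (fun o : O => cst x o)) //.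
exists (fun k : @assign X O [set x] => k (exist _ x xx)) => [o _|k _]; first by rewrite ffunE.
apply/ffunP => u; rewrite ffunE; congr (k _); apply: val_inj => /=.
by have /set1P := valP u.
Qed.

Lemma agree_same (U : {set X}) (s t : @assign X O U) : agree s t = (t == s).
Proof.
apply/forallP/eqP => [H|->].
  apply/ffunP => u; have /forallP/(_ u) := H u; by rewrite eqxx /= => /eqP.
by move=> u; apply/forallP => v; apply/implyP => /eqP /val_inj ->.
Qed.

Lemma agree_restr (U : {set X}) (s : @assign X O U) (g : @assign X O [set: X]) :
  agree s g = (s == restr U g).
Proof.
apply/forallP/eqP => [H|->].
  apply/ffunP => u; rewrite ffunE /at_; apply/eqP.
  by have /forallP/(_ (exist _ (val u) (in_setT (val u))))/implyP := H u; apply => /=.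
move=> u; apply/forallP => v; apply/implyP => /eqP e.
by rewrite ffunE e at_val.
Qed.

Lemma agree_restrC (U C : {set X}) (sub : U \subset C) (s : @assign X O U) (g : @assign X O [set: X]) :
  agree s (restr C g) = agree s g.
Proof.
rewrite agree_restr; apply/forallP/eqP => [H|->].
  apply/ffunP => u; rewrite ffunE.
  have uC : val u \in C by apply: (subsetP sub); exact: valP.
  have /forallP/(_ (exist _ (val u) uC))/implyP := H u.
  by move=> /(_ (eqxx _)) /eqP ->; rewrite ffunE.
move=> u; apply/forallP => v; apply/implyP => /eqP e.
by rewrite !ffunE e.
Qed.

Lemma marg_trans (U C : {set X}) (sub : U \subset C) (e : @assign X O [set: X] -> R) (s : @assign X O U) :
  @marg X O U C (@marg X O C [set: X] e) s = @marg X O U [set: X] e s.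
Proof.
rewrite /marg [RHS](partition_big (restr C) (fun c => agree s c)) /=; last first.
  by move=> g; rewrite agree_restrC.
apply: eq_bigr => c sc; apply: eq_bigl => g.
rewrite agree_restr; apply/eqP/andP => [E|[H /eqP <-]] //.
by rewrite -(agree_restrC sub) -E.
Qed.

End Comb2.

Unset Implicit Arguments.
Unset Strict Implicit.
Unset Printing Implicit Defensive.
Open Scope R_scope.

Section Canon2.
Variables (X O : finType) (M : {set {set X}}) (S : Type) (st : S -> @state_fam X O).

Lemma stU_M (hc : is_cover M) sg C (CM : C \in M) (s : @assign X O C) :
  stU M st sg C s = st sg C s.
Proof.
rewrite /stU; case: pickP => [C' /andP[C'M sub] | none]; last first.
  by have := none C; rewrite CM subxx.
have E : C' = C.
  case: hc => _ /(_ C C' CM C'M); rewrite properE sub /= => /negbNE sub'.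
  by apply/eqP; rewrite eqEsubset sub'.
subst C'; rewrite /marg (big_pred1 s) // => t; by rewrite agree_same.
Qed.

Lemma leqbP x y : label_equivb M st x y <-> label_equiv M st x y.
Proof. by rewrite /label_equivb; case: excluded_middle_informative. Qed.

Lemma qmap_eq x y : label_equiv M st x y -> qmap M st x = qmap M st y.
Proof.
move=> H; apply: val_inj => /=; apply/setP => z; rewrite !inE.
apply/idP/idP => /leqbP H2; apply/leqbP => sg o.
  by rewrite -H2 H.
by rewrite -H2 -H.
Qed.

Lemma qmap_surj (c : Xq M st) : exists x, qmap M st x = c.
Proof.
have /existsP [x /eqP e] := svalP c.
by exists x; apply: val_inj => /=; rewrite e.
Qed.

Lemma tq_inj : injective (tq M st).
Proof.
move=> t1 t2 E; apply/ffunP => c; have [x <-] := qmap_surj c.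
have := congr1 (fun g : @assign X O [set: X] => g (exist _ x (in_setT x))) E; by rewrite /= !ffunE.
Qed.

Lemma tq_surj (g : @assign X O [set: X]) :
  (forall x x', label_equiv M st x x' -> at_ g x = at_ g x') -> exists t, tq M st t = g.
Proof.
move=> H.
exists [ffun c : Xq M st => at_ g (xchoose (existsP (svalP c)))].
apply/ffunP => u; rewrite !ffunE.
set r := xchoose _.
have := xchooseP (existsP (svalP (qmap M st (val u)))); rewrite -/r /= => /eqP e.
have : r \in cls M st r by rewrite inE; apply/leqbP.
rewrite -e inE => /leqbP /H <-; by rewrite at_val.
Qed.

End Canon2.

Unset Implicit Arguments.
Open Scope R_scope.

Lemma Rle_term (I : finType) (F : I -> R) (i : I) :
  (forall j, 0 <= F j) -> F i <= \big[Rplus/R0]_(j : I) F j.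
Proof.
move=> H; rewrite (bigD1 i) //=; apply: Rle_addr; apply: sum_ge0 => j _; exact: H.
Qed.

Lemma sum_mulr (I : Type) (r : seq I) (P : pred I) (F : I -> R) a :
  \big[Rplus/R0]_(i <- r | P i) (F i * a) = (\big[Rplus/R0]_(i <- r | P i) F i) * a.
Proof.
elim: r => [|i r IH]; first by rewrite !big_nil Rmult_0_l.
rewrite !big_cons; case: ifP => _ //; rewrite IH; ring.
Qed.

Theorem mainTheorem6
  (X O : finType) (M : {set {set X}}) (S : Type) (st : S -> @state_fam X O)
  (Om : countType) (mu : S -> Om -> R)
  (xi : forall U : {set X}, Om -> @assign X O U -> R) :
  empirical_theory M st ->
  no_signalling M st ->
  ont_rep M st mu xi ->
  factorizable M xi ->
  ont_noncontextual M st mu xi ->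
  (exists d : S -> @assign X O [set: X] -> R,
      (forall sg s, psum (dterm mu xi sg s) (d sg s)) /\
      global_section M st d) /\
  sheaf_noncontextual M st /\
  (forall d : S -> @assign X O [set: X] -> R,
      global_section M st d -> canonical_ok M st d ->
      forall sg (U : {set X}) (s : @assign X O U), measurement M U ->
        psum (fun l => Rmult (xi U l s) (mu sg l))
             (fsum (fun t : Omcan M st => Rmult (xi_can M st U t s) (mu_can M st d sg t)))).
Proof.
move=> [hc hfd] _ [hmu [hxi hrep]] hfac _.
have meas1 x : measurement M [set x].
  split; first by apply/set0Pn; exists x; rewrite set11.
  have : x \in \bigcup_(C in M) C by rewrite hc.1 in_setT.
  case/bigcupP => C CM xC; apply/existsP; exists C; by rewrite CM sub1set.
have sum1 l x : \big[Rplus/R0]_(o : O) xi [set x] l (cst x o) = R1.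
  by rewrite -sum_cst; case: (hxi _ (meas1 x) l).
have xi01 l x o : 0 <= xi [set x] l (cst x o) <= 1.
  case: (hxi _ (meas1 x) l) => h0 _; split => //.
  apply: Rle_trans (Rle_term _ (fun o => xi [set x] l (cst x o)) o _) _ => [j|]; first exact: h0.
  rewrite sum1; lra.
have prod01 l (t : @assign X O [set: X]) :
    0 <= \big[Rmult/R1]_(x : X) xi [set x] l (cst x (at_ t x)) <= 1.
  apply: (big_ind (fun y => 0 <= y <= 1)); first lra.
    move=> a b ha hb; split; first by apply: Rmult_le_pos; lra.
    have := Rmult_le_compat a 1 b 1; rewrite Rmult_1_l => hh; apply: hh; lra.
  move=> x _; exact: xi01.
have mu0 sg l : 0 <= mu sg l by case: (hmu sg) => h _; exact: h.
have Hex sg s : exists a, psum (dterm mu xi sg s) a.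
  apply: (@psum_exists _ _ (mu sg) R1) => [l|]; last exact: hmu.
  rewrite /dterm; have := prod01 l s; have := mu0 sg l => h1 h2; split.
    by apply: Rmult_le_pos; lra.
  have := Rmult_le_compat_r _ _ _ h1 (proj2 h2); rewrite Rmult_1_l; done.
pose d sg s := proj1_sig (constructive_indefinite_description _ (Hex sg s)).
have hd sg s : psum (dterm mu xi sg s) (d sg s) := proj2_sig (constructive_indefinite_description _ (Hex sg s)).
have hgs : global_section M st d.
  move=> sg; split.
    split; first by move=> s; exact: psum_ge0 (hd sg s).
    have := @psum_big _ _ (index_enum (@assign X O [set: X])) (fun _ => true) (fun t => dterm mu xi sg t) (d sg) (fun t _ => hd sg t).
    move=> P; apply: (psum_unique P); apply: psum_ext (hmu sg) => l.
    symmetry; rewrite /dterm sum_mulr. rewrite (total_prod (fun x o => xi [set x] l (cst x o))) big1 ?Rmult_1_l // => x _; exact: sum1.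
  move=> C CM s.
  have := @psum_big _ _ (index_enum (@assign X O [set: X])) (fun t => agree s t) (fun t => dterm mu xi sg t) (d sg) (fun t _ => hd sg t).
  move=> P.
  have E1 l : \big[Rplus/R0]_(t | agree s t) dterm mu xi sg t l =
      (\big[Rmult/R1]_(u : {x : X | x \in C}) xi [set val u] l (cst (val u) (s u))) * mu sg l.
    rewrite /dterm sum_mulr (@marg_prod _ _ _ s (fun x o => xi [set x] l (cst x o))) // => x _; exact: sum1.
  have P' := psum_ext E1 P.
  case: (eqVneq C set0) => [C0|Cn0].
    subst C.
    have E2 l : (\big[Rmult/R1]_(u : {x : X | x \in set0}) xi [set val u] l (cst (val u) (s u))) * mu sg l = mu sg l.
      by rewrite big1 ?Rmult_1_l // => u; have := valP u; rewrite in_set0.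
    have P2 := psum_ext E2 P'.
    rewrite /marg (psum_unique P2 (hmu sg)).
    case: (hfd sg set0 CM) => _; rewrite /fsum (big_pred1 s) // => t /=.
    by apply/esym/eqP/ffunP => u; have := valP u; rewrite in_set0.
  have mC : measurement M C.
    split => //; apply/existsP; exists C; by rewrite CM subxx.
  rewrite -(stU_M X O M S st hc sg C CM s); apply: (psum_unique P').
  by apply: psum_ext (hrep sg C mC s) => l; rewrite (hfac C mC l s).
split; first by exists d.
split; first by exists d.
move=> d' hgs' [hco1 _] sg U s mU.
suff -> : fsum (fun t : Omcan M st => xi_can M st U t s * mu_can M st d' sg t) = stU M st sg U s by exact: hrep.
rewrite /stU; case: pickP => [C /andP[CM sub] | none]; last first.
  by case: mU => _ /existsP [C /andP[CM sub]]; have := none C; rewrite CM sub.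
have -> : @marg X O U C (st sg C) s = @marg X O U C (@marg X O C [set: X] (d' sg)) s.
  rewrite /marg; apply: eq_bigr => c _; by rewrite -(proj2 (hgs' sg) C CM c).
rewrite (marg_trans sub).
rewrite /fsum /xi_can /mu_can /marg.
transitivity (\big[Rplus/R0]_(t : Omcan M st | s == restr U (tq M st t)) d' sg (tq M st t)).
  rewrite [RHS]big_mkcond; apply: eq_bigr => t _; case: ifP => _; ring.
rewrite [RHS](bigID (fun g => [exists t, tq M st t == g])) /=.
rewrite [X in _ = Rplus _ X]big1; last first.
  move=> g /andP[_ nex].
  case: (boolP [exists x, exists x', label_equivb M st x x' && (at_ g x != at_ g x')]).
    case/existsP => x /existsP [x' /andP[/(leqbP _ _ _ _ _) le ne]]; exact: hco1 sg g x x' le ne.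
  move=> nall; exfalso.
  have [t tg] : exists t, tq M st t = g.
    apply: tq_surj => x x' le; apply/eqP; apply: contraNT nall => ne.
    apply/existsP; exists x; apply/existsP; exists x'; rewrite ne andbT; exact/(leqbP _ _ _ _ _).
  by move: nex; rewrite negb_exists => /forallP /(_ t); rewrite tg eqxx.
rewrite Rplus_0_r.
rewrite [RHS](reindex_omap (tq M st) (fun g => [pick t | tq M st t == g])) /=; last first.
  move=> g /andP[_ /existsP [t /eqP tg]]; case: pickP => [t' /eqP e|none] /=; first by rewrite e.
  by have := none t; rewrite tg eqxx.
apply: eq_bigl => t; rewrite agree_restr.
have -> : [exists t', tq M st t' == tq M st t] by apply/existsP; exists t.
case: pickP => [t' /eqP /(tq_inj _ _ _ _ _) -> | none]; first by rewrite eqxx !andbT.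
by have := none t; rewrite eqxx.
Qed.
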